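(* Let $\alpha\in(0,1)\cup(1,\infty)$ and let $p_{X,Y}=p_Xp_{Y\mid X}$ be a joint distribution on finite alphabets $\mathcal X\times\mathcal Y$. Then $$I_\alpha^{\mathrm S}(X;Y)=\max_{r_{X\mid Y}}F_\alpha^{\mathrm{S1}}(p_X,r_{X\mid Y})=\max_{r_{X\mid Y}}F_\alpha^{\mathrm{S2}}(p_X,r_{X\mid Y}),$$ where $$F_\alpha^{\mathrm{S1}}(p_X,r_{X\mid Y}):=\frac{\alpha}{\alpha-1}\log\sum_{x,y}p_X(x)^{1/\alpha}p_{Y\mid X}(y\mid x)\,r_{X\mid Y}(x\mid y)^{1-\frac1\alpha},$$ $$F_\alpha^{\mathrm{S2}}(p_X,r_{X\mid Y}):=F_\alpha^{\mathrm{S1}}(p_X,r_{X_\alpha\mid Y})=\frac{\alpha}{\alpha-1}\log\sum_{x,y}p_X(x)^{1/\alpha}p_{Y\mid X}(y\mid x)\,r_{X_\alpha\mid Y}(x\mid y)^{1-\frac1\alpha}.$$ Moreover, for $\alpha\in(1,\infty)$, $$I_\alpha^{\mathrm S}(X;Y)=\max_{\tilde q_{X,Y}}\max_{r_{X\mid Y}}\tilde F_\alpha^{\mathrm{S3}}(p_X,\tilde q_{X,Y},r_{X\mid Y}),$$ where, writing $\tilde q_X$ for the $X$-marginal of $\tilde q_{X,Y}$, $$\tilde F_\alpha^{\mathrm{S3}}(p_X,\tilde q_{X,Y},r_{X\mid Y}):=\frac{\alpha}{1-\alpha}D(\tilde q_{X,Y}\,\|\,\tilde q_Xp_{Y\mid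 X})+\mathbb E^{\tilde q_{X,Y}}\!\left[\log\frac{r_{X\mid Y}(X\mid Y)}{\tilde q_X(X)}\right]+\frac{1}{1-\alpha}D(\tilde q_X\,\|\,p_X).$$
   Context: All alphabets are finite and $\log$ is the natural logarithm. $D(p\|q)=\sum_z p(z)\log\frac{p(z)}{q(z)}$ is the Kullback–Leibler divergence. For $\alpha\in(0,1)\cup(1,\infty)$, the Rényi divergence is $D_\alpha(p\|q):=\frac{1}{\alpha-1}\log\sum_z p(z)^\alpha q(z)^{1-\alpha}$, and the Sibson mutual information of order $\alpha$ is $I_\alpha^{\mathrm S}(X;Y):=\min_{q_Y}D_\alpha(p_Xp_{Y\mid X}\|p_Xq_Y)$, the minimum over all distributions $q_Y$ on $\mathcal Y$. A reverse channel $r_{X\mid Y}=\{r_{X\mid Y}(\cdot\mid y)\}_{y\in\mathcal Y}$ is a family of distributions on $\mathcal X$ indexed by $y$; maxima over $r_{X\mid Y}$ range over all reverse channels, and maxima over $\tilde q_{X,Y}$ range over all joint distributions on $\mathcal X\times\mathcal Y$. $r_{X_\alpha\mid Y}$ denotes the $\alpha$-tilted reverse channel, $r_{X_\alpha\mid Y}(x\mid y):=r_{X\mid Y}(x\mid y)^\alpha/\sum_{x'}r_{X\mid Y}(x'\mid y)^\alpha$. $\mathbb E^{q}[\cdot]$ denotes expectation with respect to $q$. *)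

(* Defs.v *)
From HB Require Import structures.
From mathcomp Require Import all_boot all_order all_algebra.
From mathcomp Require Import all_classical all_reals all_analysis.
Set Implicit Arguments. Unset Strict Implicit. Unset Printing Implicit Defensive.
Import Order.TTheory GRing.Theory Num.Theory.
Local Open Scope ring_scope.
Local Open Scope classical_set_scope.

Section Defs.
Variable R : realType.

Definition xpow (a b : R) : \bar R :=
  if a == 0 then (if b < 0 then +oo%E else if b == 0 then 1%E else 0%E)
  else (a `^ b)%:E.

Definition xlog (v : \bar R) : \bar R :=
  match v with
  | r%:E => if 0 < r then (ln r)%:E else -oo%E
  | +oo%E => +oo%E
  | -oo%E => -oo%E
  end.

Definition is_dist (T : finType) (f : {ffun T -> R}) : Prop :=
  (forall t, 0 <= f t) /\ \sum_t f t = 1.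

Definition is_channel (A B : finType) (W : {ffun A -> {ffun B -> R}}) : Prop :=
  forall a, is_dist (W a).

(* Renyi divergence of order alpha (with the usual conventions 0 * oo = 0) *)
Definition renyi_div (T : finType) (alpha : R) (p q : {ffun T -> R}) : \bar R :=
  ((alpha - 1)^-1)%:E *
  xlog (\sum_(z : T) (xpow (p z) alpha * xpow (q z) (1 - alpha)))%E.

Definition kl_div (T : finType) (p q : {ffun T -> R}) : \bar R :=
  (\sum_(z : T) (if p z == 0%R then 0%E
                 else if q z == 0%R then +oo%E
                 else (p z * ln (p z / q z))%R%:E))%E.

Variables X Y : finType.

Definition joint (pX : {ffun X -> R}) (pYX : {ffun X -> {ffun Y -> R}})
  : {ffun X * Y -> R} := [ffun z => pX z.1 * pYX z.1 z.2].

Definition prod_dist (pX : {ffun X -> R}) (qY : {ffun Y -> R})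
  : {ffun X * Y -> R} := [ffun z => pX z.1 * qY z.2].

Definition margX (q : {ffun X * Y -> R}) : {ffun X -> R} :=
  [ffun x => \sum_(y : Y) q (x, y)].

(* Sibson mutual information: min over q_Y (rendered as infimum) *)
Definition sibson_MI (alpha : R) (pX : {ffun X -> R})
  (pYX : {ffun X -> {ffun Y -> R}}) : \bar R :=
  ereal_inf [set renyi_div alpha (joint pX pYX) (prod_dist pX qY)
            | qY in [set qY : {ffun Y -> R} | is_dist qY]].

(* reverse channel r : r y x = r_{X|Y}(x|y) *)
Definition F_S1 (alpha : R) (pX : {ffun X -> R})
  (pYX : {ffun X -> {ffun Y -> R}}) (r : {ffun Y -> {ffun X -> R}}) : \bar R :=
  (alpha / (alpha - 1))%:E *
  xlog (\sum_(z : X * Y)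
          (xpow (pX z.1) (alpha^-1) * (pYX z.1 z.2)%:E
           * xpow (r z.2 z.1) (1 - alpha^-1)))%E.

Definition tilt (alpha : R) (r : {ffun Y -> {ffun X -> R}})
  : {ffun Y -> {ffun X -> R}} :=
  [ffun y => [ffun x => r y x `^ alpha / \sum_(x' : X) r y x' `^ alpha]].

Definition F_S2 (alpha : R) (pX : {ffun X -> R})
  (pYX : {ffun X -> {ffun Y -> R}}) (r : {ffun Y -> {ffun X -> R}}) : \bar R :=
  F_S1 alpha pX pYX (tilt alpha r).

Definition expect_log_ratio (q : {ffun X * Y -> R})
  (r : {ffun Y -> {ffun X -> R}}) : \bar R :=
  (\sum_(z : X * Y) (if q z == 0%R then 0%E
                     else if r z.2 z.1 == 0%R then -oo%E
                     else (q z * ln (r z.2 z.1 / margX q z.1))%R%:E))%E.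

Definition F_S3 (alpha : R) (pX : {ffun X -> R})
  (pYX : {ffun X -> {ffun Y -> R}}) (q : {ffun X * Y -> R})
  (r : {ffun Y -> {ffun X -> R}}) : \bar R :=
  ((alpha / (1 - alpha))%:E * kl_div q (joint (margX q) pYX)
   + expect_log_ratio q r
   + ((1 - alpha)^-1)%:E * kl_div (margX q) pX)%E.

End Defs.

Definition is_max_of (R : realType) (U : Type) (P : U -> Prop)
  (f : U -> \bar R) (v : \bar R) : Prop :=
  (exists u, P u /\ f u = v) /\ (forall u, P u -> (f u <= v)%E).

(* Main.v *)
Require Import Defs.
From HB Require Import structures.
From mathcomp Require Import all_boot all_order all_algebra.
From mathcomp Require Import all_classical all_reals all_analysis.
From mathcomp Require Import ring lra.
Import Order.TTheory GRing.Theory Num.Theory.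
Local Open Scope ring_scope.

Module Helpers.
Set Implicit Arguments. Unset Strict Implicit. Unset Printing Implicit Defensive.


Lemma amgm (R : realType) (g u v : R) : 0 < g < 1 -> 0 <= u -> 0 <= v ->
  u `^ g * v `^ (1 - g) <= g * u + (1 - g) * v.
Proof.
move=> /andP[g0 g1] u0 v0.
have g1' : 0 < 1 - g by rewrite subr_gt0.
have := @conjugate_powR R (u `^ g) (v `^ (1 - g)) (g^-1) ((1 - g)^-1)
  (powR_ge0 _ _) (powR_ge0 _ _).
rewrite !invr_gt0 => /(_ g0 g1'); rewrite !GRing.invrK addrC subrK => /(_ erefl).
rewrite -!powRrM !mulfV ?gt_eqF // !powRr1 // ?invrK.
by rewrite [u * g]mulrC [v * _]mulrC.
Qed.

Lemma holder (R : realType) (T : finType) (g : R) (f h : T -> R) :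
  0 < g < 1 -> (forall t, 0 <= f t) -> (forall t, 0 <= h t) ->
  \sum_t f t `^ g * h t `^ (1 - g) <=
  (\sum_t f t) `^ g * (\sum_t h t) `^ (1 - g).
Proof.
move=> /andP[g0 g1] f0 h0.
have g1' : 0 < 1 - g by rewrite subr_gt0.
have F0 : 0 <= \sum_t f t by apply: sumr_ge0 => t _; exact: f0.
have H0 : 0 <= \sum_t h t by apply: sumr_ge0 => t _; exact: h0.
have rhs0 : 0 <= (\sum_t f t) `^ g * (\sum_t h t) `^ (1 - g).
  by rewrite mulr_ge0 // powR_ge0.
case: (eqVneq (\sum_t f t) 0) => [/eqP|Fn0].
  rewrite psumr_eq0; last by move=> t _; exact: f0.
  move=> /allP fz; rewrite big1 // => t _.
  by rewrite (eqP (fz t (mem_index_enum t))) powR0 ?gt_eqF // mul0r.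
case: (eqVneq (\sum_t h t) 0) => [/eqP|Hn0].
  rewrite psumr_eq0; last by move=> t _; exact: h0.
  move=> /allP hz; rewrite big1 // => t _.
  by rewrite (eqP (hz t (mem_index_enum t))) powR0 ?gt_eqF // mulr0.
set F := \sum_t f t in F0 Fn0 rhs0 *; set H := \sum_t h t in H0 Hn0 rhs0 *.
have Fp : 0 < F by rewrite lt_def Fn0.
have Hp : 0 < H by rewrite lt_def Hn0.
have step t : f t `^ g * h t `^ (1 - g) <=
    F `^ g * H `^ (1 - g) * (g * (f t / F) + (1 - g) * (h t / H)).
  have -> : f t `^ g * h t `^ (1 - g) =
      F `^ g * H `^ (1 - g) * ((f t / F) `^ g * (h t / H) `^ (1 - g)).
    rewrite -{1}(divfK Fn0 (f t)) -{1}(divfK Hn0 (h t)).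
    rewrite !powRM ?divr_ge0 ?f0 ?h0 ?invr_ge0 ?ltW //; ring.
  apply: ler_wpM2l => //; apply: amgm; rewrite ?g0 ?g1 ?divr_ge0 ?f0 ?h0 ?ltW //.
apply: le_trans (ler_sum _ (fun t _ => step t)) _.
rewrite -mulr_sumr big_split /= -!mulr_sumr -!mulr_suml !mulfV //.
by rewrite !mulr1 addrC subrK mulr1.
Qed.


Lemma lee_nmul (R : realType) (z : R) (x y : \bar R) :
  z <= 0 -> (x <= y)%E -> (z%:E * y <= z%:E * x)%E.
Proof.
move=> z0 xy; have := @lee_wpmul2l R (- z)%:E _ _ _ xy.
by rewrite lee_fin oppr_ge0 => /(_ z0); rewrite EFinN !mulNe leeN2.
Qed.

Lemma sume_Ny (R : realType) (T : finType) (f : T -> \bar R) t :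
  f t = -oo%E -> (\sum_t f t = -oo)%E.
Proof. by move=> ft; rewrite (bigD1 t) //= ft addNye. Qed.

Lemma sume_neqNy (R : realType) (T : finType) (P : pred T) (f : T -> \bar R) :
  (forall t, f t != -oo%E) -> (\sum_(t | P t) f t != -oo)%E.
Proof.
move=> ft; apply: (big_ind (fun x => x != -oo%E)) => //.
by case=> [x| |] [y| |].
Qed.

Lemma sume_y (R : realType) (T : finType) (f : T -> \bar R) t :
  (forall t, f t != -oo%E) -> f t = +oo%E -> (\sum_t f t = +oo)%E.
Proof.
move=> fN ft; rewrite (bigD1 t) //= ft addye //.
exact: sume_neqNy.
Qed.

Lemma xlog_EFin (R : realType) (r : R) : 0 < r -> xlog r%:E = (ln r)%:E.
Proof. by move=> r0; rewrite /xlog r0. Qed.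

Lemma xlog_le (R : realType) (u v : \bar R) : (0 <= u)%E -> (u <= v)%E ->
  (xlog u <= xlog v)%E.
Proof.
case: u => [u| |] //; case: v => [v| |] //=.
- rewrite !lee_fin => u0 uv.
  case: (ltP 0 u) => [u0'|]; last by move=> _; exact: leNye.
  rewrite (lt_le_trans u0' uv) lee_fin ler_ln //.
  by rewrite posrE (lt_le_trans u0' uv).
- move=> _ _; exact: leey.
Qed.

Lemma xpow_pos (R : realType) (a b : R) : 0 < a -> xpow a b = (a `^ b)%:E.
Proof. by move=> a0; rewrite /xpow gt_eqF. Qed.

Lemma xpow0_pos (R : realType) (b : R) : 0 < b -> xpow 0 b = 0%E.
Proof. by move=> b0; rewrite /xpow eqxx ltNge (ltW b0) /= gt_eqF. Qed.

Lemma xpow0_neg (R : realType) (b : R) : b < 0 -> xpow 0 b = +oo%E.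
Proof. by move=> b0; rewrite /xpow eqxx b0. Qed.

Lemma xpow_ge0 (R : realType) (a b : R) : (0 <= xpow a b)%E.
Proof.
rewrite /xpow; case: ifP => _; last by rewrite lee_fin powR_ge0.
by case: ifP => _ //; case: ifP.
Qed.


Lemma pp_pos (R : realType) (p w : R) : 0 <= p -> 0 <= w -> p * w != 0 ->
  0 < p /\ 0 < w.
Proof.
move=> p0 w0; rewrite mulf_eq0 negb_or => /andP[pn wn].
by split; rewrite lt_def ?pn ?wn.
Qed.

Lemma renyi_term (R : realType) (al p w q : R) : 0 < al -> 0 <= p -> 0 <= w ->
  0 <= q -> (0 < q \/ p * w = 0 \/ al < 1) ->
  (xpow (p * w) al * xpow (p * q) (1 - al) = (p * w `^ al * q `^ (1 - al))%:E)%E.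
Proof.
move=> al0 p0 w0 q0 H.
case: (eqVneq (p * w) 0) => [pw0|pwn].
  rewrite pw0 xpow0_pos // mul0e; move: pw0 => /eqP; rewrite mulf_eq0.
  by case/orP => /eqP->; rewrite ?mul0r ?powR0 ?gt_eqF ?mulr0 ?mul0r //=.
have [pp wp] := pp_pos p0 w0 pwn.
rewrite xpow_pos ?mulr_gt0 //.
case: (ltP 0 q) => [qp|q0'].
  rewrite xpow_pos ?mulr_gt0 // -EFinM; congr (_%:E).
  rewrite !powRM ?ltW // mulrACA -powRD; last by rewrite (gt_eqF pp) implybT.
  by rewrite addrC subrK powRr1 ?ltW // mulrA.

have qz : q = 0 by apply/eqP; rewrite eq_le q0 q0'.
have al1 : al < 1 by case: H => [|[]]; rewrite ?qz ?ltxx //; move=> /eqP; rewrite (negPf pwn).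
rewrite qz mulr0 xpow0_pos ?subr_gt0 // mule0 powR0 ?mulr0 //.
by rewrite subr_eq0 eq_sym lt_eqF.
Qed.

Lemma renyi_term_inf (R : realType) (al p w : R) : 1 < al -> 0 < p * w ->
  (xpow (p * w) al * xpow (p * 0) (1 - al) = +oo)%E.
Proof.
move=> al1 pw; rewrite xpow_pos // mulr0 xpow0_neg ?subr_lt0 //.
by rewrite gt0_muley // lte_fin powR_gt0.
Qed.

Definition aa (R : realType) (X Y : finType) (al : R) (pX : {ffun X -> R})
  (W : {ffun X -> {ffun Y -> R}}) x y := pX x * W x y `^ al.
Definition BB (R : realType) (X Y : finType) (al : R) (pX : {ffun X -> R})
  (W : {ffun X -> {ffun Y -> R}}) y := \sum_x aa al pX W x y.
Definition SS (R : realType) (X Y : finType) (al : R) (pX : {ffun X -> R})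
  (W : {ffun X -> {ffun Y -> R}}) := \sum_y BB al pX W y `^ al^-1.

Lemma aa_ge0 (R : realType) (X Y : finType) (al : R) pX W x y :
  is_dist pX -> @aa R X Y al pX W x y >= 0.
Proof. by case=> p0 _; rewrite /aa mulr_ge0 ?powR_ge0. Qed.

Lemma BB_ge0 (R : realType) (X Y : finType) (al : R) pX W y :
  is_dist pX -> @BB R X Y al pX W y >= 0.
Proof. by move=> d; apply: sumr_ge0 => x _; exact: aa_ge0. Qed.

Lemma aa_eq0 (R : realType) (X Y : finType) (al : R) pX W x y : al != 0 ->
  (@aa R X Y al pX W x y == 0) = (pX x * W x y == 0).
Proof.
move=> al0; rewrite /aa !mulf_eq0 powR_eq0 al0 andbT //.
Qed.

Lemma BB_eq0 (R : realType) (X Y : finType) (al : R) pX W y : al != 0 ->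
  is_dist pX -> @BB R X Y al pX W y = 0 -> forall x, pX x * W x y = 0.
Proof.
move=> al0 d /eqP; rewrite psumr_eq0; last by move=> x _; exact: aa_ge0.
by move=> /allP H x; apply/eqP; rewrite -(aa_eq0 _ _ _ _ al0); apply: H; exact: mem_index_enum.
Qed.

Lemma BB_gt0 (R : realType) (X Y : finType) (al : R) pX (W : {ffun X -> {ffun Y -> R}}) x y :
  al != 0 -> is_dist pX -> is_channel W -> pX x * W x y != 0 ->
  0 < @BB R X Y al pX W y.
Proof.
move=> al0 d c H; rewrite lt_def BB_ge0 // andbT; apply/eqP => /BB_eq0.
by move=> /(_ al0 d x) /eqP; rewrite (negPf H).
Qed.

Lemma dist_pos (R : realType) (T : finType) (f : {ffun T -> R}) :
  is_dist f -> exists t, 0 < f t.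
Proof.
case=> f0 f1; apply/not_existsP => H.
have : \sum_t f t = 0 by apply: big1 => t _; apply/eqP; rewrite eq_le f0 andbT leNgt; apply/negP => /(H t).
by rewrite f1 => /eqP; rewrite oner_eq0.
Qed.

Lemma SS_gt0 (R : realType) (X Y : finType) (al : R) pX (W : {ffun X -> {ffun Y -> R}}) :
  al != 0 -> is_dist pX -> is_channel W -> 0 < @SS R X Y al pX W.
Proof.
move=> al0 d c; have [x px] := dist_pos d; have [y wy] := dist_pos (c x).
have H : pX x * W x y != 0 by rewrite mulf_neq0 // gt_eqF.
rewrite /SS (bigD1 y) //=; apply: (lt_le_trans (powR_gt0 al^-1 (BB_gt0 al0 d c H))).
by rewrite lerDl; apply: sumr_ge0 => i _; exact: powR_ge0.
Qed.

Lemma powK (R : realType) (B al : R) : 0 <= B -> al != 0 -> (B `^ al^-1) `^ al = B.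
Proof. by move=> B0 al0; rewrite -powRrM mulVf // powRr1. Qed.

Lemma powK' (R : realType) (B al : R) : 0 <= B -> al != 0 -> (B `^ al) `^ al^-1 = B.
Proof. by move=> B0 al0; rewrite -powRrM mulfV // powRr1. Qed.

Lemma sum_XY (R : realType) (X Y : finType) (F : X -> Y -> R) :
  \sum_(z : X * Y) F z.1 z.2 = \sum_y \sum_x F x y.
Proof. by rewrite -pair_bigA /= exchange_big. Qed.

Lemma esum_XY (R : realType) (X Y : finType) (F : X -> Y -> \bar R) :
  (\sum_(z : X * Y) F z.1 z.2 = \sum_y \sum_x F x y)%E.
Proof. by rewrite -pair_bigA /= exchange_big. Qed.

Definition Tsum (R : realType) (X Y : finType) (al : R) (pX : {ffun X -> R})
  (W : {ffun X -> {ffun Y -> R}}) (q : {ffun Y -> R}) : \bar R :=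
  (\sum_(z : X * Y) (xpow (joint pX W z) al * xpow (prod_dist pX q z) (1 - al)))%E.

Lemma renyiE (R : realType) (X Y : finType) (al : R) pX W q :
  renyi_div al (joint pX W) (prod_dist pX q) = (((al - 1)^-1)%:E * xlog (@Tsum R X Y al pX W q))%E.
Proof. by []. Qed.

Lemma TsumE (R : realType) (X Y : finType) (al : R) (pX : {ffun X -> R})
  (W : {ffun X -> {ffun Y -> R}}) (q : {ffun Y -> R}) :
  0 < al -> is_dist pX -> is_channel W -> is_dist q ->
  (forall x y, 0 < q y \/ pX x * W x y = 0 \/ al < 1) ->
  Tsum al pX W q = (\sum_y q y `^ (1 - al) * BB al pX W y)%:E.
Proof.
move=> al0 [p0 _] c [q0 _] H.
rewrite /Tsum (eq_bigr (fun z => (pX z.1 * W z.1 z.2 `^ al * q z.2 `^ (1 - al))%:E)).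
  rewrite sumEFin (sum_XY (fun x y => pX x * W x y `^ al * q y `^ (1 - al))); congr (_%:E); apply: eq_bigr => y _.
  by rewrite /BB mulr_sumr; apply: eq_bigr => x _; rewrite /aa; ring.
move=> [x y] _ /=; rewrite !ffunE /=; apply: renyi_term => //.
by case: (c x).
Qed.

Lemma ffun_ge0_ne (R : realType) (X Y : finType) (al : R) pX W q (t : X * Y) :
  (xpow (joint pX W t) al * xpow (prod_dist pX q t) (1 - al) != -oo)%E.
Proof.
rewrite -ltNye; apply: (lt_le_trans _ (mule_ge0 (xpow_ge0 _ _) (xpow_ge0 _ _))).
exact: ltNy0.
Qed.

Lemma renyi_lb (R : realType) (X Y : finType) (al : R) (pX : {ffun X -> R})
  (W : {ffun X -> {ffun Y -> R}}) (q : {ffun Y -> R}) :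
  0 < al -> al != 1 -> is_dist pX -> is_channel W -> is_dist q ->
  ((al / (al - 1) * ln (SS al pX W))%:E <= renyi_div al (joint pX W) (prod_dist pX q))%E.
Proof.
move=> al0 al1 dp c dq.
have al0' : al != 0 by rewrite gt_eqF.
have S0 := SS_gt0 al0' dp c.
have Bge0 y : 0 <= BB al pX W y by exact: BB_ge0.
have qge0 y : 0 <= q y by case: dq.
have p0 x : 0 <= pX x by case: dp.
have W0 x y : 0 <= W x y by case: (c x).
rewrite renyiE.
have key : (al / (al - 1) * ln (SS al pX W))%:E =
    (((al - 1)^-1)%:E * (al * ln (SS al pX W))%:E)%E.
  by rewrite -EFinM; congr (_%:E); ring.
rewrite key.
have Fge0 : 0 <= \sum_y q y `^ (1 - al) * BB al pX W y.
  by apply: sumr_ge0 => y _; rewrite mulr_ge0 ?powR_ge0.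
case: (ltgtP al 1) => [al_lt1 | al_gt1 | /eqP]; last by rewrite (negPf al1).
- rewrite TsumE //; last by move=> *; right; right.
  apply: lee_nmul; first by rewrite invr_le0 subr_le0 ltW.
  have HT : \sum_y q y `^ (1 - al) * BB al pX W y <= SS al pX W `^ al.
    have := @holder R Y al (fun y => BB al pX W y `^ al^-1) q.
    rewrite al0 al_lt1 /= => /(_ erefl (fun _ => powR_ge0 _ _) qge0).
    case: dq => _ ->; rewrite powR1 mulr1 /SS; apply: le_trans; rewrite le_eqVlt; apply/orP; left.
    by apply/eqP; apply: eq_bigr => y _; rewrite powK // mulrC.
  rewrite -ln_powR -xlog_EFin ?powR_gt0 //; apply: xlog_le => //.
- case: (pselect (exists z : X * Y, pX z.1 * W z.1 z.2 != 0 /\ q z.2 = 0)) =>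
      [[[x y] /= [pw qz]]| Hn].
    rewrite /Tsum (@sume_y _ _ _ (x, y)); last 2 first.
    + by move=> t; exact: ffun_ge0_ne.
    + rewrite !ffunE /= qz; apply: renyi_term_inf => //.
      by rewrite lt_def pw mulr_ge0 // ?p0 ?W0.
    by rewrite /xlog gt0_muley ?lte_fin ?invr_gt0 ?subr_gt0 //; exact: leey.
  have pw0 x y : q y = 0 -> pX x * W x y = 0.
    by move=> qz; apply/eqP/negPn/negP => pw; apply: Hn; exists (x, y).
  have H x y : 0 < q y \/ pX x * W x y = 0 \/ al < 1.
    case: (ltP 0 (q y)) => qy; [by left | right; left].
    by apply: pw0; apply/eqP; rewrite eq_le qy qge0.
  rewrite TsumE //.
  apply: lee_wpmul2l; first by rewrite lee_fin invr_ge0 subr_ge0 ltW.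
  rewrite -ln_powR -xlog_EFin ?powR_gt0 //; apply: xlog_le.
    by rewrite lee_fin powR_ge0.
  rewrite lee_fin.
  have eqA y : (q y `^ (1 - al) * BB al pX W y) `^ al^-1 * q y `^ (1 - al^-1) =
      BB al pX W y `^ al^-1.
    case: (ltP 0 (q y)) => qy.
      rewrite powRM ?powR_ge0 // -powRrM mulrAC -powRD; last by rewrite (gt_eqF qy) implybT.
      have -> : (1 - al) * al^-1 + (1 - al^-1) = 0 by field.
      by rewrite powRr0 mul1r.
    have qz : q y = 0 by apply/eqP; rewrite eq_le qy qge0.
    have B0 : BB al pX W y = 0.
      by apply: big1 => x _; apply/eqP; rewrite aa_eq0 // pw0.
    have h1 : 1 - al^-1 != 0 by rewrite gt_eqF // subr_gt0 invf_lt1.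
    by rewrite qz B0 mulr0 !powR0 ?invr_eq0 ?mulr0.
  have := @holder R Y al^-1 (fun y => q y `^ (1 - al) * BB al pX W y) q.
  rewrite invr_gt0 al0 invf_lt1 // al_gt1 /=.
  move=> /(_ erefl (fun y => mulr_ge0 (powR_ge0 _ _) (Bge0 y)) qge0).
  case: (dq) => _ ->; rewrite powR1 mulr1 (eq_bigr _ (fun y _ => eqA y)) -/(SS al pX W).
  move=> hol.
  have := @ge0_ler_powR R al (ltW al0) _ _ _ _ hol.
  by rewrite powK // !nnegrE => /(_ (ltW S0)) ->; rewrite ?powR_ge0.
Qed.

Definition qstar (R : realType) (X Y : finType) (al : R) (pX : {ffun X -> R})
  (W : {ffun X -> {ffun Y -> R}}) : {ffun Y -> R} :=
  [ffun y => BB al pX W y `^ al^-1 / SS al pX W].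

Lemma qstar_dist (R : realType) (X Y : finType) (al : R) pX W :
  al != 0 -> is_dist pX -> is_channel W -> is_dist (@qstar R X Y al pX W).
Proof.
move=> al0 dp c; have S0 := SS_gt0 al0 dp c; split.
  by move=> y; rewrite ffunE divr_ge0 ?powR_ge0 // ltW.
rewrite (eq_bigr (fun y => BB al pX W y `^ al^-1 / SS al pX W)); last by move=> y _; rewrite ffunE.
by rewrite -mulr_suml mulfV // gt_eqF.
Qed.

Lemma aux_qstar (R : realType) (A S al : R) : 0 <= A -> 0 < S -> 0 < al ->
  (A / S) `^ (1 - al) * A `^ al = A * S `^ (al - 1).
Proof.
move=> A0 S0 al0; case: (eqVneq A 0) => [->|An0].
  by rewrite mul0r [0 `^ al]powR0 ?gt_eqF // mulr0 mul0r.
have Ap : 0 < A by rewrite lt_def An0.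
rewrite powRM ?invr_ge0 ?ltW // -powR_inv1 ?ltW // -powRrM.
rewrite mulrAC -powRD; last by rewrite (gt_eqF Ap) implybT.
by rewrite subrK powRr1 ?ltW // mulN1r opprB.
Qed.

Lemma renyi_qstar (R : realType) (X Y : finType) (al : R) (pX : {ffun X -> R})
  (W : {ffun X -> {ffun Y -> R}}) :
  0 < al -> al != 1 -> is_dist pX -> is_channel W ->
  renyi_div al (joint pX W) (prod_dist pX (qstar al pX W)) =
  (al / (al - 1) * ln (SS al pX W))%:E.
Proof.
move=> al0 al1 dp c.
have al0' : al != 0 by rewrite gt_eqF.
have S0 := SS_gt0 al0' dp c.
have p0 x : 0 <= pX x by case: dp.
have W0 x y : 0 <= W x y by case: (c x).
rewrite renyiE TsumE //; first last.
- move=> x y; case: (eqVneq (pX x * W x y) 0) => [->|pw]; [by right; left | left].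
  by rewrite ffunE divr_gt0 // powR_gt0 // (BB_gt0 al0' dp c pw).
- exact: qstar_dist.
rewrite (eq_bigr (fun y => BB al pX W y `^ al^-1 * SS al pX W `^ (al - 1))); last first.
  move=> y _; rewrite ffunE -{2}(powK (BB_ge0 al W y dp) al0').
  by rewrite aux_qstar ?powR_ge0.
rewrite -mulr_suml -/(SS al pX W) mulr_powRB1 ?ltW //.
rewrite xlog_EFin ?powR_gt0 // ln_powR -EFinM; congr (_%:E); ring.
Qed.

Lemma sibson_val (R : realType) (X Y : finType) (al : R) (pX : {ffun X -> R})
  (W : {ffun X -> {ffun Y -> R}}) :
  0 < al -> al != 1 -> is_dist pX -> is_channel W ->
  sibson_MI al pX W = (al / (al - 1) * ln (SS al pX W))%:E.
Proof.
move=> al0 al1 dp c; apply/eqP; rewrite eq_le; apply/andP; split.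
  apply: ge_ereal_inf; exists (renyi_div al (joint pX W) (prod_dist pX (qstar al pX W))).
    by exists (qstar al pX W) => //; apply: qstar_dist; rewrite // gt_eqF.
  by rewrite renyi_qstar.
apply: le_ereal_inf_tmp => _ [q /= dq <-]; exact: renyi_lb.
Qed.


Lemma s1_term (R : realType) (al p w r : R) : 0 < al -> 0 <= p -> 0 <= w ->
  0 <= r -> (0 < r \/ p * w = 0 \/ 1 < al) ->
  (xpow p al^-1 * w%:E * xpow r (1 - al^-1) =
   (p `^ al^-1 * w * r `^ (1 - al^-1))%:E)%E.
Proof.
move=> al0 p0 w0 r0 H.
have ai0 : 0 < al^-1 by rewrite invr_gt0.
case: (eqVneq p 0) => [pz|pn].
  by rewrite pz xpow0_pos // !mul0e powR0 ?gt_eqF // !mul0r.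
have pp : 0 < p by rewrite lt_def pn.
rewrite xpow_pos //.
case: (eqVneq w 0) => [wz|wn].
  by rewrite wz mule0 mul0e mulr0 mul0r.
have wp : 0 < w by rewrite lt_def wn.
case: (ltP 0 r) => [rp|r0'].
  by rewrite xpow_pos // -!EFinM.
have rz : r = 0 by apply/eqP; rewrite eq_le r0 r0'.
have al1 : 1 < al.
  case: H => [|[]]; rewrite ?rz ?ltxx // => /eqP.
  by rewrite mulf_eq0 (negPf pn) (negPf wn).
have g : 0 < 1 - al^-1 by rewrite subr_gt0 invf_lt1.
by rewrite rz xpow0_pos // mule0 powR0 ?gt_eqF // mulr0.
Qed.

Lemma s1_term_inf (R : realType) (al p w : R) : 0 < al -> al < 1 -> 0 < p -> 0 < w ->
  (xpow p al^-1 * w%:E * xpow 0 (1 - al^-1) = +oo)%E.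
Proof.
move=> al0 al1 pp wp.
rewrite xpow_pos // xpow0_neg; last by rewrite subr_lt0 invf_gt1.
by rewrite -EFinM gt0_muley // lte_fin mulr_gt0 // powR_gt0.
Qed.

Definition Usum (R : realType) (X Y : finType) (al : R) (pX : {ffun X -> R})
  (W : {ffun X -> {ffun Y -> R}}) (r : {ffun Y -> {ffun X -> R}}) : \bar R :=
  (\sum_(z : X * Y)
          (xpow (pX z.1) (al^-1) * (W z.1 z.2)%:E
           * xpow (r z.2 z.1) (1 - al^-1)))%E.

Lemma FS1E (R : realType) (X Y : finType) (al : R) pX W r :
  F_S1 al pX W r = ((al / (al - 1))%:E * xlog (@Usum R X Y al pX W r))%E.
Proof. by []. Qed.

Definition vv (R : realType) (X Y : finType) (al : R) (pX : {ffun X -> R})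
  (W : {ffun X -> {ffun Y -> R}}) (r : {ffun Y -> {ffun X -> R}}) x y :=
  pX x `^ al^-1 * W x y * r y x `^ (1 - al^-1).

Lemma UsumE (R : realType) (X Y : finType) (al : R) (pX : {ffun X -> R})
  (W : {ffun X -> {ffun Y -> R}}) (r : {ffun Y -> {ffun X -> R}}) :
  0 < al -> is_dist pX -> is_channel W -> is_channel r ->
  (forall x y, 0 < r y x \/ pX x * W x y = 0 \/ 1 < al) ->
  Usum al pX W r = (\sum_y \sum_x vv al pX W r x y)%:E.
Proof.
move=> al0 [p0 _] c cr H.
rewrite /Usum (eq_bigr (fun z => (vv al pX W r z.1 z.2)%:E)).
  by rewrite sumEFin (sum_XY (fun x y => vv al pX W r x y)).
move=> [x y] _ /=; rewrite /vv; apply: s1_term => //.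
  by case: (c x).
by case: (cr y).
Qed.

Lemma vv_aa (R : realType) (X Y : finType) (al : R) (pX : {ffun X -> R})
  (W : {ffun X -> {ffun Y -> R}}) (r : {ffun Y -> {ffun X -> R}}) x y :
  0 < al -> is_dist pX -> is_channel W ->
  vv al pX W r x y = aa al pX W x y `^ al^-1 * r y x `^ (1 - al^-1).
Proof.
move=> al0 [p0 _] c; rewrite /vv /aa powRM ?powR_ge0 // powK' ?gt_eqF //.
by case: (c x).
Qed.

Lemma vv_le_gt1 (R : realType) (X Y : finType) (al : R) (pX : {ffun X -> R})
  (W : {ffun X -> {ffun Y -> R}}) (r : {ffun Y -> {ffun X -> R}}) y :
  1 < al -> is_dist pX -> is_channel W -> is_channel r ->
  \sum_x vv al pX W r x y <= BB al pX W y `^ al^-1.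
Proof.
move=> al1 dp c cr; have al0 : 0 < al by apply: lt_trans al1.
rewrite (eq_bigr _ (fun x _ => vv_aa r x y al0 dp c)).
have := @holder R X al^-1 (fun x => aa al pX W x y) (r y).
rewrite invr_gt0 al0 invf_lt1 // al1 /= => /(_ erefl (fun x => aa_ge0 _ _ _ _ dp)).
by case: (cr y) => r0 ->; rewrite powR1 mulr1; apply.
Qed.

Lemma vv_ge_lt1 (R : realType) (X Y : finType) (al : R) (pX : {ffun X -> R})
  (W : {ffun X -> {ffun Y -> R}}) (r : {ffun Y -> {ffun X -> R}}) y :
  0 < al -> al < 1 -> is_dist pX -> is_channel W -> is_channel r ->
  (forall x, r y x = 0 -> pX x * W x y = 0) ->
  BB al pX W y `^ al^-1 <= \sum_x vv al pX W r x y.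
Proof.
move=> al0 al1 dp c cr H.
have al0' : al != 0 by rewrite gt_eqF.
have [r0 r1] := cr y.
have vv0 x : 0 <= vv al pX W r x y.
  by rewrite /vv !mulr_ge0 ?powR_ge0 //; case: (c x).
have := @holder R X al (fun x => vv al pX W r x y) (r y).
rewrite al0 al1 /= => /(_ erefl vv0 r0).
rewrite r1 powR1 mulr1.
rewrite (eq_bigr (fun x => aa al pX W x y)); last first.
  move=> x _; rewrite vv_aa //.
  case: (ltP 0 (r y x)) => rp.
    rewrite powRM ?powR_ge0 // powK ?aa_ge0 // -powRrM -mulrA -powRD; last by rewrite (gt_eqF rp) implybT.
    have -> : (1 - al^-1) * al + (1 - al) = 0 by field.
    by rewrite powRr0 mulr1.
  have rz : r y x = 0 by apply/eqP; rewrite eq_le rp r0.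
  have az : aa al pX W x y = 0 by apply/eqP; rewrite aa_eq0 // H.
  have h1 : 1 - al^-1 != 0 by rewrite lt_eqF // subr_lt0 invf_gt1.
  by rewrite rz az (powR0 h1) mulr0 powR0 ?mulr0 // gt_eqF // subr_gt0.
move=> hol; have := @ge0_ler_powR R al^-1 _ _ _ _ _ hol.
rewrite powK' //; last exact: sumr_ge0.
apply; rewrite ?invr_ge0 ?ltW // nnegrE ?powR_ge0 //; exact: BB_ge0.
Qed.

Lemma usum_ne (R : realType) (X Y : finType) (al : R) (pX : {ffun X -> R})
  (W : {ffun X -> {ffun Y -> R}}) (r : {ffun Y -> {ffun X -> R}}) (t : X * Y) :
  is_channel W ->
  (xpow (pX t.1) (al^-1) * (W t.1 t.2)%:E * xpow (r t.2 t.1) (1 - al^-1) != -oo)%E.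
Proof.
move=> c; rewrite -ltNye; apply: (lt_le_trans ltNy0).
rewrite mule_ge0 ?xpow_ge0 // mule_ge0 ?xpow_ge0 // lee_fin.
by case: (c t.1).
Qed.

Lemma FS1_ub (R : realType) (X Y : finType) (al : R) (pX : {ffun X -> R})
  (W : {ffun X -> {ffun Y -> R}}) (r : {ffun Y -> {ffun X -> R}}) :
  0 < al -> al != 1 -> is_dist pX -> is_channel W -> is_channel r ->
  (F_S1 al pX W r <= (al / (al - 1) * ln (SS al pX W))%:E)%E.
Proof.
move=> al0 al1 dp c cr.
have al0' : al != 0 by rewrite gt_eqF.
have S0 := SS_gt0 al0' dp c.
have p0 x : 0 <= pX x by case: dp.
have W0 x y : 0 <= W x y by case: (c x).
have r0 x y : 0 <= r y x by case: (cr y).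
have vv0 x y : 0 <= vv al pX W r x y by rewrite /vv !mulr_ge0 ?powR_ge0.
rewrite FS1E (EFinM (al / (al - 1))).
case: (ltgtP al 1) => [al_lt1 | al_gt1 | /eqP]; last by rewrite (negPf al1).
- case: (pselect (exists z : X * Y, pX z.1 * W z.1 z.2 != 0 /\ r z.2 z.1 = 0)) =>
      [[[x y] /= [pw rz]]| Hn].
    rewrite /Usum (@sume_y _ _ _ (x, y)); last 2 first.
    + by move=> t; exact: usum_ne.
    + have [pp wp] := pp_pos (p0 x) (W0 x y) pw.
      by rewrite /= rz; apply: s1_term_inf.
    by rewrite /xlog lt0_muley ?leNye // lte_fin pmulr_rlt0 // invr_lt0 subr_lt0.
  have pw0 x y : r y x = 0 -> pX x * W x y = 0.
    by move=> qz; apply/eqP/negPn/negP => pw; apply: Hn; exists (x, y).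
  have H x y : 0 < r y x \/ pX x * W x y = 0 \/ 1 < al.
    case: (ltP 0 (r y x)) => qy; [by left | right; left].
    by apply: pw0; apply/eqP; rewrite eq_le qy r0.
  rewrite UsumE //.
  apply: lee_nmul; first by rewrite pmulr_rle0 // invr_le0 subr_le0 ltW.
  rewrite -xlog_EFin //; apply: xlog_le; first exact: (ltW (S0 : (0%:E < (SS al pX W)%:E)%E)).
  rewrite lee_fin; apply: ler_sum => y _; apply: vv_ge_lt1 => // x; exact: pw0.
- rewrite UsumE //; last by move=> *; right; right.
  apply: lee_wpmul2l; first by rewrite lee_fin divr_ge0 ?subr_ge0 ?ltW.
  rewrite -xlog_EFin //; apply: xlog_le.
    by rewrite lee_fin; apply: sumr_ge0 => y _; apply: sumr_ge0.
  rewrite lee_fin; apply: ler_sum => y _; exact: vv_le_gt1.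
Qed.

Definition rstar (R : realType) (X Y : finType) (al : R) (pX : {ffun X -> R})
  (W : {ffun X -> {ffun Y -> R}}) : {ffun Y -> {ffun X -> R}} :=
  [ffun y => [ffun x => if BB al pX W y == 0 then pX x else aa al pX W x y / BB al pX W y]].

Lemma rstar_channel (R : realType) (X Y : finType) (al : R) pX W :
  is_dist pX -> is_channel (@rstar R X Y al pX W).
Proof.
move=> dp y; rewrite /rstar; split.
  move=> x; rewrite !ffunE; case: ifP => _; first by case: dp.
  by rewrite divr_ge0 ?aa_ge0 ?BB_ge0.
rewrite (eq_bigr (fun x => if BB al pX W y == 0 then pX x else aa al pX W x y / BB al pX W y)); last by move=> x _; rewrite !ffunE.
case: (eqVneq (BB al pX W y) 0) => B0; first by case: dp.
by rewrite -mulr_suml mulfV.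
Qed.

Lemma FS1_rstar (R : realType) (X Y : finType) (al : R) (pX : {ffun X -> R})
  (W : {ffun X -> {ffun Y -> R}}) :
  0 < al -> al != 1 -> is_dist pX -> is_channel W ->
  F_S1 al pX W (rstar al pX W) = (al / (al - 1) * ln (SS al pX W))%:E.
Proof.
move=> al0 al1 dp c.
have al0' : al != 0 by rewrite gt_eqF.
have S0 := SS_gt0 al0' dp c.
have p0 x : 0 <= pX x by case: dp.
have W0 x y : 0 <= W x y by case: (c x).
have ai0 : 0 < al^-1 by rewrite invr_gt0.
rewrite FS1E UsumE //; first last.
- move=> x y; case: (eqVneq (pX x * W x y) 0) => [->|pw]; [by right; left | left].
  have Bp := BB_gt0 al0' dp c pw.
  rewrite !ffunE (gt_eqF Bp) divr_gt0 // lt_def aa_ge0 // andbT aa_eq0 //.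
- exact: rstar_channel.
rewrite (eq_bigr (fun y => BB al pX W y `^ al^-1)) -/(SS al pX W).
  by rewrite xlog_EFin // -EFinM.
move=> y _; case: (eqVneq (BB al pX W y) 0) => [B0|Bn0].
  rewrite B0 powR0 ?gt_eqF //; apply: big1 => x _.
  have := BB_eq0 al0' dp B0 x => /eqP; rewrite mulf_eq0 /vv.
  by case/orP => /eqP ->; rewrite ?powR0 ?gt_eqF // !(mul0r, mulr0).
have Bp : 0 < BB al pX W y by rewrite lt_def Bn0 BB_ge0.
rewrite (eq_bigr (fun x => aa al pX W x y * BB al pX W y `^ (al^-1 - 1))); last first.
  move=> x _; rewrite vv_aa // !ffunE (negPf Bn0) mulrC aux_qstar ?aa_ge0 //.
by rewrite -mulr_suml mulr_powRB1 ?BB_ge0.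
Qed.


Lemma powR_divr (R : realType) (u N a : R) : 0 <= u -> 0 < N ->
  (u / N) `^ a = u `^ a / N `^ a.
Proof.
move=> u0 N0; rewrite powRM // ?invr_ge0 ?(ltW N0) //; congr (_ * _).
by rewrite -powR_inv1 ?ltW // -powRrM mulrC powRrM powR_inv1 ?powR_ge0.
Qed.

Lemma tilt_sum_gt0 (R : realType) (T : finType) (d : {ffun T -> R}) g :
  is_dist d -> 0 < \sum_t d t `^ g.
Proof.
move=> dd; have [t dt] := dist_pos dd.
rewrite (bigD1 t) //=; apply: (lt_le_trans (powR_gt0 g dt)).
by rewrite lerDl; apply: sumr_ge0 => i _; exact: powR_ge0.
Qed.

Lemma tilt_channel (R : realType) (X Y : finType) (g : R) (r : {ffun Y -> {ffun X -> R}}) :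
  is_channel r -> is_channel (tilt g r).
Proof.
move=> cr y; have N0 := tilt_sum_gt0 g (cr y); split.
  by move=> x; rewrite !ffunE divr_ge0 ?powR_ge0 ?ltW.
rewrite (eq_bigr (fun x => r y x `^ g / \sum_x' r y x' `^ g)); last by move=> x _; rewrite !ffunE.
by rewrite -mulr_suml mulfV ?gt_eqF.
Qed.

Lemma tiltE (R : realType) (X Y : finType) (g : R) (r : {ffun Y -> {ffun X -> R}}) y x :
  tilt g r y x = r y x `^ g / \sum_x' r y x' `^ g.
Proof. by rewrite !ffunE. Qed.

Lemma tilt_inv (R : realType) (X Y : finType) (al : R) (r : {ffun Y -> {ffun X -> R}}) :
  al != 0 -> is_channel r -> tilt al (tilt al^-1 r) = r.
Proof.
move=> al0 cr; apply/ffunP => y; apply/ffunP => x.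
have N0 := tilt_sum_gt0 al^-1 (cr y).
have [r0 r1] := cr y.
rewrite tiltE.
under eq_bigr do rewrite tiltE.
rewrite tiltE.
set N := \sum_x' r y x' `^ al^-1.
under eq_bigr do rewrite powR_divr ?powR_ge0 // powK //.
rewrite powR_divr ?powR_ge0 // powK // -mulr_suml r1 mul1r invrK.
by rewrite divfK // gt_eqF // powR_gt0.
Qed.

Lemma FS2_ub (R : realType) (X Y : finType) (al : R) (pX : {ffun X -> R})
  (W : {ffun X -> {ffun Y -> R}}) (r : {ffun Y -> {ffun X -> R}}) :
  0 < al -> al != 1 -> is_dist pX -> is_channel W -> is_channel r ->
  (F_S2 al pX W r <= (al / (al - 1) * ln (SS al pX W))%:E)%E.
Proof. by move=> *; apply: FS1_ub => //; exact: tilt_channel. Qed.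

Lemma FS2_att (R : realType) (X Y : finType) (al : R) (pX : {ffun X -> R})
  (W : {ffun X -> {ffun Y -> R}}) :
  0 < al -> al != 1 -> is_dist pX -> is_channel W ->
  F_S2 al pX W (tilt al^-1 (rstar al pX W)) = (al / (al - 1) * ln (SS al pX W))%:E.
Proof.
move=> al0 al1 dp c; rewrite /F_S2 tilt_inv ?gt_eqF //; last exact: rstar_channel.
exact: FS1_rstar.
Qed.


Lemma vv_rstar (R : realType) (X Y : finType) (al : R) (pX : {ffun X -> R})
  (W : {ffun X -> {ffun Y -> R}}) y :
  0 < al -> is_dist pX -> is_channel W ->
  \sum_x vv al pX W (rstar al pX W) x y = BB al pX W y `^ al^-1.
Proof.
move=> al0 dp c.
have al0' : al != 0 by rewrite gt_eqF.
have ai0 : 0 < al^-1 by rewrite invr_gt0.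
case: (eqVneq (BB al pX W y) 0) => [B0|Bn0].
  rewrite B0 powR0 ?gt_eqF //; apply: big1 => x _.
  have := BB_eq0 al0' dp B0 x => /eqP; rewrite mulf_eq0 /vv.
  by case/orP => /eqP ->; rewrite ?powR0 ?gt_eqF // !(mul0r, mulr0).
have Bp : 0 < BB al pX W y by rewrite lt_def Bn0 BB_ge0.
rewrite (eq_bigr (fun x => aa al pX W x y * BB al pX W y `^ (al^-1 - 1))); last first.
  move=> x _; rewrite vv_aa // !ffunE (negPf Bn0) mulrC aux_qstar ?aa_ge0 //.
by rewrite -mulr_suml mulr_powRB1 ?BB_ge0.
Qed.

Lemma sum_XY' (R : realType) (X Y : finType) (F : X -> Y -> R) :
  \sum_(z : X * Y) F z.1 z.2 = \sum_x \sum_y F x y.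
Proof. by rewrite -pair_bigA. Qed.

Lemma ln_le_sub1 (R : realType) (t : R) : 0 < t -> ln t <= t - 1.
Proof.
move=> t0; have := @le_ln1Dx R (t - 1); rewrite (_ : 1 + (t - 1) = t); last by ring.
by apply; lra.
Qed.

Lemma gibbs (R : realType) (T : finType) (q v : T -> R) :
  (forall t, 0 <= q t) -> \sum_t q t = 1 -> (forall t, 0 <= v t) ->
  (forall t, q t != 0 -> 0 < v t) ->
  \sum_t (if q t == 0 then 0 else q t * ln (v t / q t)) <= ln (\sum_t v t).
Proof.
move=> q0 q1 v0 qv.
have [t qt] : exists t, q t != 0.
  apply/not_existsP => H; move: q1; rewrite big1 => [/eqP|s _].
    by rewrite eq_sym oner_eq0.
  by apply/eqP/negPn/negP => /(H s).
set V := \sum_t v t.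
have V0 : 0 < V.
  rewrite /V (bigD1 t) //=; apply: (lt_le_trans (qv t qt)).
  by rewrite lerDl; apply: sumr_ge0.
have step s : (if q s == 0 then 0 else q s * ln (v s / q s)) <=
    v s / V - q s + q s * ln V.
  case: eqP => [->|/eqP qn]; first by rewrite subr0 mul0r addr0 divr_ge0 // ltW.
  have qp : 0 < q s by rewrite lt_def qn q0.
  have vp := qv s qn.
  have -> : v s / q s = (v s / (q s * V)) * V by rewrite invfM mulrA divfK ?gt_eqF.
  rewrite lnM ?posrE; [|by rewrite divr_gt0 // mulr_gt0|by []].
  rewrite mulrDr lerD2r.
  have := ln_le_sub1 (divr_gt0 vp (mulr_gt0 qp V0)).
  move=> /(ler_wpM2l (ltW qp)) H; apply: (le_trans H); rewrite le_eqVlt; apply/orP; left.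
  by apply/eqP; field; rewrite !gt_eqF.
apply: le_trans (ler_sum _ (fun s _ => step s)) _.
rewrite !big_split /= -mulr_suml -/V mulfV ?gt_eqF // -mulr_suml q1 mul1r.
by rewrite sumrN q1 subrr add0r.
Qed.

Lemma lnD' (R : realType) (a b : R) : 0 < a -> 0 < b -> ln (a / b) = ln a - ln b.
Proof. by move=> a0 b0; rewrite ln_div ?posrE. Qed.

Lemma lnM' (R : realType) (a b : R) : 0 < a -> 0 < b -> ln (a * b) = ln a + ln b.
Proof. by move=> a0 b0; rewrite lnM ?posrE. Qed.

Lemma margX_ge (R : realType) (X Y : finType) (q : {ffun X * Y -> R}) x y :
  is_dist q -> q (x, y) <= margX q x.
Proof.
case=> q0 _; rewrite ffunE (bigD1 y) //= lerDl.
by apply: sumr_ge0 => i _; exact: q0.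
Qed.

Lemma margX_eq0 (R : realType) (X Y : finType) (q : {ffun X * Y -> R}) x :
  is_dist q -> margX q x = 0 -> forall y, q (x, y) = 0.
Proof.
case=> q0 _; rewrite ffunE => /eqP; rewrite psumr_eq0; last by move=> i _; exact: q0.
by move=> /allP H y; apply/eqP; apply: H; exact: mem_index_enum.
Qed.

Lemma FS3_good (R : realType) (X Y : finType) (al : R) (pX : {ffun X -> R})
  (W : {ffun X -> {ffun Y -> R}}) (q : {ffun X * Y -> R}) (r : {ffun Y -> {ffun X -> R}}) :
  0 < al -> al != 1 -> is_dist pX -> is_channel W -> is_dist q -> is_channel r ->
  (forall z, q z != 0 -> [/\ 0 < pX z.1, 0 < W z.1 z.2 & 0 < r z.2 z.1]) ->
  F_S3 al pX W q r = (al / (al - 1) *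
     \sum_z (if q z == 0 then 0 else q z * ln (vv al pX W r z.1 z.2 / q z)))%:E.
Proof.
move=> al0 al1 dp c dq cr Hg.
have q0 z : 0 <= q z by case: dq.
have qXp z : q z != 0 -> 0 < margX q z.1.
  move=> qz; apply: (lt_le_trans _ (margX_ge z.1 z.2 dq)).
  by rewrite -surjective_pairing lt_def qz q0.
have K1E : kl_div q (joint (margX q) W) = (\sum_z (if q z == 0 then 0 else
    q z * ln (q z / (margX q z.1 * W z.1 z.2))))%:E.
  rewrite /kl_div -sumEFin; apply: eq_bigr => z _; rewrite ffunE.
  case: eqP => [//|/eqP qz]; have [_ wp _] := Hg z qz.
  by rewrite mulf_eq0 !gt_eqF ?qXp.
have EE : expect_log_ratio q r = (\sum_z (if q z == 0 then 0 else
    q z * ln (r z.2 z.1 / margX q z.1)))%:E.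
  rewrite /expect_log_ratio -sumEFin; apply: eq_bigr => z _.
  case: eqP => [//|/eqP qz]; have [_ _ rp] := Hg z qz.
  by rewrite gt_eqF.
have K2E : kl_div (margX q) pX = (\sum_x (if margX q x == 0 then 0 else
    margX q x * ln (margX q x / pX x)))%:E.
  rewrite /kl_div -sumEFin; apply: eq_bigr => x _.
  case: eqP => [//|/eqP qx].
  have [y qy] : exists y, q (x, y) != 0.
    apply/not_existsP => H; move: qx; rewrite ffunE big1 ?eqxx // => y _.
    by apply/eqP/negPn/negP => /(H y).
  by have [pp _ _] := Hg (x, y) qy; rewrite gt_eqF.
have K2' : \sum_x (if margX q x == 0 then 0 else margX q x * ln (margX q x / pX x)) =
    \sum_z (if q z == 0 then 0 else q z * ln (margX q z.1 / pX z.1)).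
  rewrite [RHS](eq_bigr (fun z => (fun x y => if q (x, y) == 0 then 0 else q (x, y) * ln (margX q x / pX x)) z.1 z.2)); last by move=> [x y].
  rewrite (sum_XY' (fun x y => if q (x, y) == 0 then 0 else q (x, y) * ln (margX q x / pX x))).
  apply: eq_bigr => x _; case: eqP => [qx|/eqP qx].
    by rewrite big1 // => y _; rewrite (margX_eq0 dq qx) eqxx.
  rewrite {1}ffunE mulr_suml; apply: eq_bigr => y _.
  by case: eqP => [->|//]; rewrite mul0r.
rewrite /F_S3 K1E EE K2E K2' -!EFinM -!EFinD; congr (_%:E).
rewrite !mulr_sumr -!big_split /=; apply: eq_bigr => z _.
case: eqP => [_|/eqP qz]; first by rewrite !mulr0 !addr0.
have [pp wp rp] := Hg z qz.
have qp : 0 < q z by rewrite lt_def qz q0.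
have mp := qXp z qz.
have al0' : al != 0 by rewrite gt_eqF.
have al1' : al - 1 != 0 by rewrite subr_eq0.
have al1'' : 1 - al != 0 by rewrite subr_eq0 eq_sym.
have e1 : ln (q z / (margX q z.1 * W z.1 z.2)) = ln (q z) - ln (margX q z.1) - ln (W z.1 z.2).
  by rewrite lnD' ?mulr_gt0 // lnM' // opprD addrA.
have e2 : ln (r z.2 z.1 / margX q z.1) = ln (r z.2 z.1) - ln (margX q z.1).
  by rewrite lnD'.
have e3 : ln (margX q z.1 / pX z.1) = ln (margX q z.1) - ln (pX z.1).
  by rewrite lnD'.
have e4 : ln (vv al pX W r z.1 z.2 / q z) = al^-1 * ln (pX z.1) + ln (W z.1 z.2)
    + (1 - al^-1) * ln (r z.2 z.1) - ln (q z).
  rewrite /vv lnD' ?mulr_gt0 ?powR_gt0 // lnM' ?mulr_gt0 ?powR_gt0 //.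
  by rewrite lnM' ?powR_gt0 // !ln_powR.
rewrite e1 e2 e3 e4; field.
by rewrite al0' al1' al1''.
Qed.

Lemma FS3_bad (R : realType) (X Y : finType) (al : R) (pX : {ffun X -> R})
  (W : {ffun X -> {ffun Y -> R}}) (q : {ffun X * Y -> R}) (r : {ffun Y -> {ffun X -> R}}) z :
  1 < al -> is_dist q -> q z != 0 ->
  pX z.1 = 0 \/ W z.1 z.2 = 0 \/ r z.2 z.1 = 0 ->
  F_S3 al pX W q r = -oo%E.
Proof.
move=> al1 dq qz H.
have a0 : al / (1 - al) < 0 by rewrite pmulr_rlt0 ?invr_lt0 ?subr_lt0 // (lt_trans ltr01).
have b0 : (1 - al)^-1 < 0 by rewrite invr_lt0 subr_lt0.
have qXp : margX q z.1 != 0.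
  apply: lt0r_neq0.
  apply: (lt_le_trans _ (margX_ge z.1 z.2 dq)).
  by rewrite -surjective_pairing lt_def qz; case: dq => + _; apply.
rewrite /F_S3.
case: H => [pz|[wz|rz]].
- rewrite (_ : kl_div (margX q) pX = +oo%E); first by rewrite lt0_muley // addeNy.
  rewrite /kl_div (@sume_y _ _ _ z.1) //.
    by move=> t; case: ifP => //; case: ifP.
  by rewrite (negPf qXp) pz eqxx.
- rewrite (_ : kl_div q (joint (margX q) W) = +oo%E); first by rewrite lt0_muley // !addNye.
  rewrite /kl_div (@sume_y _ _ _ z) //.
    by move=> t; case: ifP => //; case: ifP.
  by rewrite (negPf qz) ffunE wz mulr0 eqxx.
- rewrite (_ : expect_log_ratio q r = -oo%E); first by rewrite addeNy addNye.
  by rewrite /expect_log_ratio (@sume_Ny _ _ _ z) // (negPf qz) rz eqxx.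
Qed.

Lemma FS3_ub (R : realType) (X Y : finType) (al : R) (pX : {ffun X -> R})
  (W : {ffun X -> {ffun Y -> R}}) (q : {ffun X * Y -> R}) (r : {ffun Y -> {ffun X -> R}}) :
  1 < al -> is_dist pX -> is_channel W -> is_dist q -> is_channel r ->
  (F_S3 al pX W q r <= (al / (al - 1) * ln (SS al pX W))%:E)%E.
Proof.
move=> al1 dp c dq cr.
have al0 : 0 < al by apply: lt_trans al1.
have al0' : al != 0 by rewrite gt_eqF.
have S0 := SS_gt0 al0' dp c.
have p0 x : 0 <= pX x by case: dp.
have W0 x y : 0 <= W x y by case: (c x).
have r0 x y : 0 <= r y x by case: (cr y).
have q0 z : 0 <= q z by case: dq.
case: (pselect (exists z, q z != 0 /\ (pX z.1 = 0 \/ W z.1 z.2 = 0 \/ r z.2 z.1 = 0))) =>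
    [[z [qz H]]|Hn].
  by rewrite (@FS3_bad R X Y al pX W q r z al1 dq qz H) leNye.
have Hg z : q z != 0 -> [/\ 0 < pX z.1, 0 < W z.1 z.2 & 0 < r z.2 z.1].
  move=> qz; split; rewrite lt_def ?p0 ?W0 ?r0 andbT; apply/eqP => H; apply: Hn; exists z; tauto.
rewrite FS3_good ?gt_eqF //.
rewrite lee_fin; apply: ler_wpM2l; first by rewrite divr_ge0 ?subr_ge0 ?ltW.
have vv0 z : 0 <= vv al pX W r z.1 z.2 by rewrite /vv !mulr_ge0 ?powR_ge0.
have vvp z : q z != 0 -> 0 < vv al pX W r z.1 z.2.
  by move=> qz; have [pp wp rp] := Hg z qz; rewrite /vv !mulr_gt0 ?powR_gt0.
have := @gibbs R _ q (fun z => vv al pX W r z.1 z.2) q0 (proj2 dq) vv0 vvp.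
move=> /le_trans; apply.
have [z qz] : exists z, q z != 0.
  have [z qz] := dist_pos dq; exists z; exact: lt0r_neq0.
have V0 : 0 < \sum_z vv al pX W r z.1 z.2.
  rewrite (bigD1 z) //=; apply: (lt_le_trans (vvp z qz)).
  by rewrite lerDl; apply: sumr_ge0.
rewrite ler_ln ?posrE // (sum_XY (fun x y => vv al pX W r x y)).
by apply: ler_sum => y _; exact: vv_le_gt1.
Qed.

Definition qtil (R : realType) (X Y : finType) (al : R) (pX : {ffun X -> R})
  (W : {ffun X -> {ffun Y -> R}}) : {ffun X * Y -> R} :=
  [ffun z => vv al pX W (rstar al pX W) z.1 z.2 / SS al pX W].

Lemma FS3_att (R : realType) (X Y : finType) (al : R) (pX : {ffun X -> R})
  (W : {ffun X -> {ffun Y -> R}}) :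
  1 < al -> is_dist pX -> is_channel W ->
  is_dist (qtil al pX W) /\
  F_S3 al pX W (qtil al pX W) (rstar al pX W) = (al / (al - 1) * ln (SS al pX W))%:E.
Proof.
move=> al1 dp c.
have al0 : 0 < al by apply: lt_trans al1.
have al0' : al != 0 by rewrite gt_eqF.
have S0 := SS_gt0 al0' dp c.
have cr := rstar_channel al W dp.
have p0 x : 0 <= pX x by case: dp.
have W0 x y : 0 <= W x y by case: (c x).
have r0 x y : 0 <= rstar al pX W y x by case: (cr y).
have vv0 z : 0 <= vv al pX W (rstar al pX W) z.1 z.2 by rewrite /vv !mulr_ge0 ?powR_ge0.
have dq : is_dist (qtil al pX W).
  split; first by move=> z; rewrite ffunE divr_ge0 // ltW.
  rewrite (eq_bigr (fun z => vv al pX W (rstar al pX W) z.1 z.2 / SS al pX W)); last by move=> z _; rewrite ffunE.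
  rewrite -mulr_suml (sum_XY (fun x y => vv al pX W (rstar al pX W) x y)).
  rewrite (eq_bigr _ (fun y _ => vv_rstar y al0 dp c)) -/(SS al pX W).
  by rewrite mulfV ?gt_eqF.
split => //.
have ai : al^-1 != 0 by rewrite invr_eq0.
have ai1 : 1 - al^-1 != 0 by rewrite gt_eqF // subr_gt0 invf_lt1.
rewrite FS3_good ?gt_eqF //; last first.
- move=> z; rewrite ffunE mulf_eq0 invr_eq0 (gt_eqF S0) orbF /vv !mulf_eq0 !negb_or.
  case/andP => /andP[h1 h2] h3; rewrite !lt_def h2 W0 p0 r0 !andbT; split => //.
    by apply: contra h1 => /eqP ->; rewrite powR0.
  by apply: contra h3 => /eqP ->; rewrite powR0.
congr (_%:E); congr (_ * _).
rewrite (eq_bigr (fun z => qtil al pX W z * ln (SS al pX W))).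
  by rewrite -mulr_suml (proj2 dq) mul1r.
move=> z _; case: eqP => [->|/eqP qn]; first by rewrite mul0r.
congr (_ * ln _); rewrite ffunE invf_div mulrCA mulfV ?mulr1 //.
by move: qn; rewrite ffunE mulf_eq0 negb_or => /andP[].
Qed.

End Helpers.
Import Helpers.
Unset Implicit Arguments.

Theorem theorem1 (R : realType) (X Y : finType) (alpha : R)
  (pX : {ffun X -> R}) (pYX : {ffun X -> {ffun Y -> R}}) :
  0 < alpha -> alpha != 1 ->
  is_dist pX -> is_channel pYX ->
  [/\ is_max_of (@is_channel R Y X) (F_S1 alpha pX pYX) (sibson_MI alpha pX pYX),
      is_max_of (@is_channel R Y X) (F_S2 alpha pX pYX) (sibson_MI alpha pX pYX)
    & 1 < alpha ->
      is_max_of (fun u : {ffun X * Y -> R} * {ffun Y -> {ffun X -> R}} =>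
                   is_dist u.1 /\ is_channel u.2)
                (fun u => F_S3 alpha pX pYX u.1 u.2)
                (sibson_MI alpha pX pYX)].
Proof.
move=> al0 al1 dp c; rewrite sibson_val //; split.
- split.
    exists (rstar alpha pX pYX); split; first exact: rstar_channel.
    exact: FS1_rstar.
  by move=> r cr; exact: FS1_ub.
- split.
    exists (tilt alpha^-1 (rstar alpha pX pYX)); split.
      by apply: tilt_channel; exact: rstar_channel.
    exact: FS2_att.
  by move=> r cr; exact: FS2_ub.
- move=> al_gt1; split.
    have [d e] := FS3_att al_gt1 dp c.
    exists (qtil alpha pX pYX, rstar alpha pX pYX); split => //; split => //.
    exact: rstar_channel.
  by move=> [q r] [dq cr]; exact: FS3_ub.
Qed.
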